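(* Let $d$ be the Euclidean metric on $\mathbb{R}^n$, let $M\subset\mathbb{R}^n$, and let $(M,d,X,C)$ be a metric coordinate system with $X$ an open subset of $\mathbb{R}^n$. Then the identity map $(X,d)\to(X,d_C)$ is a homeomorphism.
   Context: A metric coordinate system is a quadruple $(M,d,X,C)$ where $(M,d)$ is a metric space, $X\subset M$, and $C\subset M$ is such that for all $x,y\in X$ with $x\neq y$ there is $c\in C$ with $d(x,c)\neq d(y,c)$. For $x\in X$, $c\in C$, $x_c:=d(x,c)$, and $d_C(x,y):=\sup_{c\in C}|x_c-y_c|$ is a metric on $X$. *)

(* Defs.v *)
From HB Require Import structures.
From mathcomp Require Import all_boot all_order all_algebra.
From mathcomp Require Import classical_sets reals.
Set Implicit Arguments. Unset Strict Implicit. Unset Printing Implicit Defensive.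
Import Order.TTheory GRing.Theory Num.Theory.
Local Open Scope ring_scope.
Local Open Scope classical_set_scope.

Definition euclid_dist {R : realType} {n : nat} (x y : 'rV[R]_n) : R :=
  Num.sqrt (\sum_(i < n) (x ord0 i - y ord0 i) ^+ 2).

Definition euclid_open {R : realType} {n : nat} (X : set 'rV[R]_n) : Prop :=
  forall x, X x -> exists2 e : R, 0 < e & forall y, euclid_dist x y < e -> X y.

(* (M,d,X,C) is a metric coordinate system (d assumed to be a metric on M) *)
Definition metric_coord_system {R : realType} {T : Type} (d : T -> T -> R)
    (M X C : set T) : Prop :=
  [/\ X `<=` M, C `<=` M &
      forall x y, X x -> X y -> x <> y -> exists2 c, C c & d x c <> d y c].

Definition dC {R : realType} {T : Type} (d : T -> T -> R) (C : set T) (x y : T) : R :=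
  sup [set `|d x c - d y c| | c in C].

Definition id_continuous_on {R : realType} {T : Type} (X : set T)
    (d1 d2 : T -> T -> R) : Prop :=
  forall x, X x -> forall e : R, 0 < e ->
    exists2 del : R, 0 < del & forall y, X y -> d1 x y < del -> d2 x y < e.

(* the identity map (X,d1) -> (X,d2) is a homeomorphism: it is a bijection,
   so this means continuity in both directions *)
Definition id_homeomorphism {R : realType} {T : Type} (X : set T)
    (d1 d2 : T -> T -> R) : Prop :=
  id_continuous_on X d1 d2 /\ id_continuous_on X d2 d1.

(* Main.v *)
Require Import Defs.
From HB Require Import structures.
From mathcomp Require Import all_boot all_order all_algebra.
From mathcomp Require Import classical_sets reals boolp.
From mathcomp Require Import ring lra zify.
Import Order.TTheory GRing.Theory Num.Theory.
Local Open Scope ring_scope.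
Local Open Scope classical_set_scope.

Definition dot {R : realType} {n : nat} (a b : 'rV[R]_n) : R :=
  \sum_i a ord0 i * b ord0 i.
Definition nrm {R : realType} {n : nat} (a : 'rV[R]_n) : R := Num.sqrt (dot a a).

Lemma dotC {R : realType} {n : nat} (a b : 'rV[R]_n) : dot a b = dot b a.
Proof. by apply: eq_bigr => i _; rewrite mulrC. Qed.

Lemma dotDl {R : realType} {n : nat} (a b c : 'rV[R]_n) :
  dot (a + b) c = dot a c + dot b c.
Proof. by rewrite /dot -big_split; apply: eq_bigr => i _; rewrite !mxE mulrDl. Qed.

Lemma dotNl {R : realType} {n : nat} (a c : 'rV[R]_n) : dot (- a) c = - dot a c.
Proof. by rewrite /dot -sumrN; apply: eq_bigr => i _; rewrite !mxE mulNr. Qed.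

Lemma dotZl {R : realType} {n : nat} (t : R) (a c : 'rV[R]_n) :
  dot (t *: a) c = t * dot a c.
Proof. by rewrite /dot mulr_sumr; apply: eq_bigr => i _; rewrite !mxE mulrA. Qed.

Lemma dotBl {R : realType} {n : nat} (a b c : 'rV[R]_n) :
  dot (a - b) c = dot a c - dot b c.
Proof. by rewrite dotDl dotNl. Qed.

Lemma dotDr {R : realType} {n : nat} (a b c : 'rV[R]_n) :
  dot c (a + b) = dot c a + dot c b.
Proof. by rewrite dotC dotDl !(dotC c). Qed.

Lemma dotBr {R : realType} {n : nat} (a b c : 'rV[R]_n) :
  dot c (a - b) = dot c a - dot c b.
Proof. by rewrite dotC dotBl !(dotC c). Qed.

Lemma dotZr {R : realType} {n : nat} (t : R) (a c : 'rV[R]_n) :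
  dot c (t *: a) = t * dot c a.
Proof. by rewrite dotC dotZl dotC. Qed.

Lemma dot_ge0 {R : realType} {n : nat} (a : 'rV[R]_n) : 0 <= dot a a.
Proof. by apply: sumr_ge0 => i _; rewrite -expr2 sqr_ge0. Qed.

Lemma dot_eq0 {R : realType} {n : nat} (a : 'rV[R]_n) : dot a a = 0 -> a = 0.
Proof.
move=> /eqP; rewrite psumr_eq0; last by move=> i _; rewrite -expr2 sqr_ge0.
move=> /allP H; apply/rowP => i; rewrite mxE.
by have /(_ (mem_index_enum i)) := H i; rewrite -expr2 sqrf_eq0 => /eqP.
Qed.

Lemma nrm_ge0 {R : realType} {n : nat} (a : 'rV[R]_n) : 0 <= nrm a.
Proof. exact: sqrtr_ge0. Qed.

Lemma nrm_sq {R : realType} {n : nat} (a : 'rV[R]_n) : nrm a ^+ 2 = dot a a.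
Proof. by rewrite sqr_sqrtr // dot_ge0. Qed.

Lemma dist_nrm {R : realType} {n : nat} (x y : 'rV[R]_n) : euclid_dist x y = nrm (x - y).
Proof. by rewrite /euclid_dist /nrm /dot; congr Num.sqrt; apply: eq_bigr => i _; rewrite !mxE expr2. Qed.

Lemma cauchy_schwarz {R : realType} {n : nat} (a b : 'rV[R]_n) :
  `|dot a b| <= nrm a * nrm b.
Proof.
have Hsq : dot a b ^+ 2 <= dot a a * dot b b.
  have [b0|bn0] := eqVneq (dot b b) 0.
    have Hb := dot_eq0 _ b0; subst b.
    have -> : dot a 0 = 0 by rewrite /dot big1 // => i _; rewrite mxE mulr0.
    by rewrite expr0n /= mulr_ge0 ?dot_ge0.
  have bp : 0 < dot b b by rewrite lt_def bn0 dot_ge0.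
  pose t := dot a b / dot b b.
  have := dot_ge0 (a - t *: b).
  rewrite !dotBl !dotBr !dotZl !dotZr (dotC b a) /t => H.
  have : 0 <= (dot a a * dot b b - dot a b ^+ 2) / dot b b.
    by move: H; congr (_ <= _); field; rewrite ?bn0.
  by rewrite pmulr_lge0 ?invr_gt0 // subr_ge0.
rewrite -[`|dot a b|]sqrtr_sqr /nrm -sqrtrM ?dot_ge0 //.
by rewrite ler_sqrt // mulr_ge0 ?dot_ge0.
Qed.

Lemma nrm_triangle {R : realType} {n : nat} (a b : 'rV[R]_n) : nrm (a + b) <= nrm a + nrm b.
Proof.
have H1 := nrm_ge0 a; have H2 := nrm_ge0 b; have H3 := nrm_ge0 (a + b).
have E : nrm (a + b) ^+ 2 = nrm a ^+ 2 + 2 * dot a b + nrm b ^+ 2.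
  by rewrite !nrm_sq dotDl !dotDr (dotC b a); ring.
have := cauchy_schwarz a b; rewrite ler_norml => /andP[_ Hc].
nra.
Qed.

Lemma nrmZ {R : realType} {n : nat} (t : R) (a : 'rV[R]_n) : nrm (t *: a) = `|t| * nrm a.
Proof. by rewrite /nrm dotZl dotZr mulrA -expr2 sqrtrM ?sqr_ge0 // sqrtr_sqr. Qed.

Lemma nrmN {R : realType} {n : nat} (a : 'rV[R]_n) : nrm (- a) = nrm a.
Proof. by rewrite -scaleN1r nrmZ normrN normr1 mul1r. Qed.

Lemma nrm_l1 {R : realType} {n : nat} (a : 'rV[R]_n) : nrm a <= \sum_i `|a ord0 i|.
Proof.
have H : 0 <= \sum_i `|a ord0 i| by apply: sumr_ge0 => i _.
rewrite /nrm -[X in _ <= X]ger0_norm // -sqrtr_sqr ler_sqrt ?sqr_ge0 //.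
rewrite expr2 mulr_suml; apply: ler_sum => i _.
rewrite -[a ord0 i * a ord0 i]expr2 -real_normK ?num_real // expr2 ler_wpM2l //.
by rewrite (bigD1 i) //= lerDl sumr_ge0.
Qed.
Lemma span_exists {R : realType} {n : nat} (P : set 'rV[R]_n) :
  exists k, exists B : 'M[R]_(k, n),
    (forall j, P (row j B)) /\ (forall v, P v -> (v <= B)%MS).
Proof.
suff H : forall m k (B : 'M[R]_(k, n)), (forall j, P (row j B)) ->
    (n - \rank B <= m)%N ->
    exists k, exists B : 'M[R]_(k, n),
      (forall j, P (row j B)) /\ (forall v, P v -> (v <= B)%MS).
  by apply: (H n 0%N 0) => //; [case | rewrite leq_subr].
elim=> [|m IH] k B HB Hr.
  exists k, B; split => // v Pv.
  have Hf : \rank B = n by have := rank_leq_col B; lia.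
  apply: submx_full; by rewrite /row_full Hf.
have [Hall|] := pselect (forall v, P v -> (v <= B)%MS).
  by exists k, B.
move=> /existsNP [v /not_implyP [Pv Hv]].
apply: (IH _ (col_mx B v)).
  move=> j; case: (split_ordP j) => j' ->.
    by rewrite rowKu.
  rewrite rowKd; have -> : row j' v = v by apply/rowP => i; rewrite mxE ord1.
  exact: Pv.
have Hlt : (\rank B < \rank (col_mx B v))%N.
  rewrite -(addsmxE B v).1.
  have := mxrank_leqif_sup (addsmxSl B v) => [[Hle Heq]].
  rewrite ltn_neqAle Hle andbT Heq.
  apply/negP => Hs; apply: Hv; apply: submx_trans Hs; exact: addsmxSr.
have := rank_leq_col (col_mx B v); lia.
Qed.
Lemma d_sym {R : realType} {n : nat} (x y : 'rV[R]_n) : euclid_dist x y = euclid_dist y x.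
Proof. by rewrite !dist_nrm -nrmN opprB. Qed.

Lemma d_tri {R : realType} {n : nat} (x y z : 'rV[R]_n) :
  euclid_dist x z <= euclid_dist x y + euclid_dist y z.
Proof. rewrite !dist_nrm; have -> : x - z = (x - y) + (y - z) by rewrite addrA subrK.
exact: nrm_triangle. Qed.

Lemma d_ge0 {R : realType} {n : nat} (x y : 'rV[R]_n) : 0 <= euclid_dist x y.
Proof. by rewrite dist_nrm nrm_ge0. Qed.

Lemma d_rev {R : realType} {n : nat} (x y c : 'rV[R]_n) :
  `|euclid_dist x c - euclid_dist y c| <= euclid_dist x y.
Proof.
have h1 := d_tri x y c; have h2 := d_tri y x c; rewrite (d_sym y x) in h2.
rewrite ler_norml; apply/andP; split; lra.
Qed.

Lemma dC_le {R : realType} {n : nat} (C : set 'rV[R]_n) x y :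
  dC (@euclid_dist R n) C x y <= euclid_dist x y.
Proof.
rewrite /dC.
have [ne|e0] := pselect ([set `|euclid_dist x c - euclid_dist y c| | c in C] !=set0).
  by apply: ge_sup => // t [c Cc <-]; apply: d_rev.
have -> : [set `|euclid_dist x c - euclid_dist y c| | c in C] = set0.
  by apply/seteqP; split => // t Ht; apply: e0; exists t.
by rewrite sup0 d_ge0.
Qed.

Lemma dC_ge {R : realType} {n : nat} (C : set 'rV[R]_n) x y c : C c ->
  `|euclid_dist x c - euclid_dist y c| <= dC (@euclid_dist R n) C x y.
Proof.
move=> Cc; apply: ub_le_sup; last by exists c.
by exists (euclid_dist x y) => t [c' _ <-]; apply: d_rev.
Qed.
Lemma delta_exists {R : realType} (a b K : R) : 0 < a -> 0 < b -> 0 < K ->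
  exists d : R, [/\ 0 < d, d <= 1, d * K <= a & d * K <= b].
Proof.
move=> a0 b0 K0; exists (Num.min 1 (Num.min (a / K) (b / K))).
have ha : 0 < a / K by rewrite divr_gt0.
have hb : 0 < b / K by rewrite divr_gt0.
split.
- by rewrite lt_min ltr01 lt_min ha hb.
- by rewrite ge_min lexx.
- by rewrite -ler_pdivlMr // ge_min orbC ge_min lexx.
- by rewrite -ler_pdivlMr // ge_min orbC ge_min lexx orbT.
Qed.

Lemma dot_mx {R : realType} {n : nat} (a b : 'rV[R]_n) : dot a b = (a *m b^T) ord0 ord0.
Proof. by rewrite mxE /dot; apply: eq_bigr => i _; rewrite mxE. Qed.

Lemma E_ident {R : realType} {n : nat} (x y c : 'rV[R]_n) :
  dot (y - c) (y - c) - dot (x - c) (x - c) = 2 * dot (y - x) (x - c) + dot (y - x) (y - x).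
Proof.
have -> : y - c = (y - x) + (x - c) by rewrite addrA subrK.
move: (y - x) (x - c) => u a.
rewrite !dotDl !dotDr (dotC a u); ring.
Qed.
Lemma lam_ident {R : realType} {n : nat} (u z a : 'rV[R]_n) :
  dot (u - z) (u - z) - 2 * dot (u - z) (u + a) =
  - ((2 * dot u a + dot u u) - dot z z - 2 * dot z a).
Proof. rewrite !dotBl !dotBr ?dotDr (dotC z u); ring. Qed.

Lemma dir2 {R : realType} {n : nat} (X C : set 'rV[R]_n)
  (inj : forall x y, X x -> X y -> x <> y ->
           exists2 c, C c & euclid_dist x c <> euclid_dist y c)
  x (Xx : X x) (r : R) (r0 : 0 < r) (ball : forall y, euclid_dist x y < r -> X y)
  c0 (Cc0 : C c0) k (B : 'M[R]_(k, n))
  (HB : forall j, exists2 c, C c & row j B = c - c0)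
  (HS : forall c, C c -> (c - c0 <= B)%MS) (e : R) (e0 : 0 < e) :
  exists2 del : R, 0 < del & forall y, X y ->
     dC (@euclid_dist R n) C x y < del -> euclid_dist x y < e.
Proof.
pose K0 := nrm (x - c0).
have K0ge : 0 <= K0 by apply: nrm_ge0.
pose L := 2 * K0 + 1 + \sum_j nrm (row j B).
have Lge : 0 <= L by rewrite addr_ge0 ?sumr_ge0 // => *; rewrite ?nrm_ge0 // addr_ge0 ?mulr_ge0.
pose P := pinvmx B^T.
pose Q := \sum_i \sum_j `|P j i|.
have Qge : 0 <= Q by apply: sumr_ge0 => i _; apply: sumr_ge0.
pose M1 := L * Q.
have M1ge : 0 <= M1 by apply: mulr_ge0.
pose M3 := (2 / e) * (2 * K0 + 1 + M1 ^+ 2 + 2 * M1 * K0).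
have M3ge : 0 <= M3.
  apply: mulr_ge0; first by rewrite divr_ge0 // ltW.
  by rewrite !addr_ge0 ?mulr_ge0 ?sqr_ge0.
have Kp : 0 < M1 + M3 + 1 by rewrite ltr_wpDl ?addr_ge0.
have e2 : 0 < e / 2 by lra.
have [del [d0 d1 dA dB]] := delta_exists (e / 2) r (M1 + M3 + 1) e2 r0 Kp.
exists del => // y Xy Hd.
rewrite ltNge; apply/negP => He.
have Fc : forall c, C c -> `|euclid_dist x c - euclid_dist y c| < del.
  by move=> c Cc; exact: le_lt_trans (dC_ge _ _ _ _ Cc) Hd.
pose u := y - x. pose a0 := x - c0.
have FE : forall c, C c ->
    `|2 * dot u (x - c) + dot u u| <= del * (2 * nrm (x - c) + 1).
  move=> c Cc; rewrite -E_ident.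
  have := Fc c Cc; rewrite !dist_nrm => h.
  have p0 := nrm_ge0 (x - c); have q0 := nrm_ge0 (y - c).
  rewrite -!nrm_sq.
  move: h; rewrite ltr_norml ler_norml => /andP[h1 h2].
  apply/andP; split; nra.
pose s := u *m B^T.
have Hs : forall j, `|s ord0 j| <= del * L.
  move=> j; have [cj Ccj Hrow] := HB j.
  have -> : s ord0 j = dot u (row j B).
    by rewrite /s dot_mx !mxE; apply: eq_bigr => i _; rewrite !mxE.
  have Hd0 : dot u (row j B) = dot u (x - c0) - dot u (x - cj).
    by rewrite Hrow -dotBr; congr dot; apply/rowP => i; rewrite !mxE; ring.
  have F0 := FE c0 Cc0; have Fj := FE cj Ccj.
  have Nj : nrm (x - cj) <= K0 + nrm (row j B).
    have -> : x - cj = (x - c0) + - (row j B).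
      by rewrite Hrow; apply/rowP => i; rewrite !mxE; ring.
    by apply: le_trans (nrm_triangle _ _) _; rewrite nrmN.
  have Sj : nrm (row j B) <= \sum_j nrm (row j B).
    by rewrite (bigD1 j) //= lerDl sumr_ge0 // => *; apply: nrm_ge0.
  have H1 : del * nrm (x - cj) <= del * (K0 + \sum_j nrm (row j B)).
    apply: ler_wpM2l; first exact: ltW.
    by apply: le_trans Nj _; rewrite lerD2l.
  rewrite Hd0 /L.
  move: F0 Fj H1; rewrite /K0 -/a0 !ler_norml => /andP[F0a F0b] /andP[Fja Fjb] H1.
  apply/andP; split; nra.
pose z := s *m P.
have Hz : z *m B^T = s by apply: mulmxKpV; apply: submxMl.
have Hzn : nrm z <= del * M1.
  apply: le_trans (nrm_l1 z) _.
  rewrite /M1 /Q mulrA mulr_sumr; apply: ler_sum => i _.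
  rewrite /z mxE mulr_sumr; apply: le_trans (ler_norm_sum _ _ _) _.
  apply: ler_sum => j _; rewrite normrM ler_wpM2r //.
pose w := u - z.
have Hw : w *m B^T = 0 by rewrite mulmxBl Hz /s subrr.
have Hwc : forall c, C c -> dot w (c - c0) = 0.
  move=> c Cc; have /submxP [D ->] := HS c Cc.
  by rewrite dot_mx trmx_mul mulmxA Hw mul0mx mxE.
have Hnu : e <= nrm u by move: He; rewrite d_sym dist_nrm.
have hM1 : del * M1 <= e / 2.
  apply: le_trans dA; apply: ler_wpM2l; [exact: ltW | lra].
have hM3 : del * M3 < e / 2.
  apply: lt_le_trans dA; rewrite ltr_pM2l //; lra.
have hM13 : del * M1 + del * M3 < r.
  apply: lt_le_trans dB; rewrite -mulrDr ltr_pM2l //; lra.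
have Hnw : e / 2 <= nrm w.
  have : nrm u <= nrm w + nrm z.
    by have := nrm_triangle w z; rewrite /w subrK.
  lra.
have nw0 : 0 < nrm w by lra.
have Ww : 0 < dot w w by rewrite -nrm_sq exprn_gt0.
have Wn0 : dot w w != 0 by rewrite gt_eqF.
pose lam := 2 * dot w (y - c0) / dot w w.
have Hlam : (1 - lam) * dot w w =
    - ((2 * dot u a0 + dot u u) - dot z z - 2 * dot z a0).
  have Hy : y - c0 = u + a0 by apply/rowP => i; rewrite !mxE; ring.
  by rewrite /lam mulrBl mul1r divfK // Hy /w lam_ident.
have Hza : `|dot z a0| <= del * M1 * K0.
  apply: le_trans (cauchy_schwarz _ _) _; rewrite ler_wpM2r //.
have Hzz : dot z z <= del * M1 ^+ 2.
  rewrite -nrm_sq; have := nrm_ge0 z => z0.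
  have : nrm z ^+ 2 <= (del * M1) ^+ 2 by rewrite lerXn2r // ?nnegrE ?mulr_ge0 // ltW.
  move=> h; apply: le_trans h _; rewrite exprMn ler_wpM2r ?sqr_ge0 //.
  rewrite expr2; have : del * del <= del * 1 by rewrite ler_wpM2l // ltW.
  by rewrite mulr1.
have HT : `|1 - lam| * nrm w <= del * M3.
  have F0 := FE c0 Cc0; rewrite -/a0 -/K0 in F0.
  have h1 : `|1 - lam| * nrm w * nrm w <= del * (2 * K0 + 1 + M1 ^+ 2 + 2 * M1 * K0).
    have -> : `|1 - lam| * nrm w * nrm w = `|(1 - lam) * dot w w|.
      by rewrite -mulrA -expr2 nrm_sq normrM (ger0_norm (ltW Ww)).
    rewrite Hlam normrN.
    have zz0 := dot_ge0 z.
    move: F0 Hza; rewrite !ler_norml => /andP[Fa Fb] /andP[Za Zb].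
    apply/andP; split; nra.
  have h2 : `|1 - lam| * nrm w * (e / 2) <= `|1 - lam| * nrm w * nrm w.
    by apply: ler_wpM2l => //; rewrite mulr_ge0 ?nrm_ge0.
  have h3 := le_trans h2 h1.
  have -> : del * M3 = del * (2 * K0 + 1 + M1 ^+ 2 + 2 * M1 * K0) / (e / 2).
    by rewrite /M3; field; rewrite gt_eqF.
  by rewrite ler_pdivlMr.
pose q := y - lam *: w.
have Xq : X q.
  apply: ball; rewrite d_sym dist_nrm.
  have -> : q - x = z + (1 - lam) *: w.
    by apply/rowP => i; rewrite !mxE; ring.
  apply: le_lt_trans (nrm_triangle _ _) _; rewrite nrmZ; lra.
have qy : q <> y.
  move=> Eq.
  have : lam *: w = 0.
    by apply/rowP => i; move/rowP: Eq => /(_ i); rewrite !mxE => h; lra.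
  move/eqP; rewrite scaler_eq0 => /orP[/eqP l0|/eqP w0].
    have h1 : 1 - lam = 1 by rewrite l0; ring.
    by move: HT; rewrite h1 normr1 mul1r; lra.
  by move: nw0; rewrite w0 /nrm /dot big1 ?sqrtr0 ?ltxx // => i _; rewrite mxE mul0r.
have [c Cc Hc] := inj q y Xq Xy qy.
apply: Hc; rewrite !dist_nrm /nrm; congr Num.sqrt.
have -> : q - c = (y - c) - lam *: w by apply/rowP => i; rewrite !mxE; ring.
have Hwy : dot w (y - c) = dot w (y - c0).
  have -> : y - c = (y - c0) - (c - c0) by apply/rowP => i; rewrite !mxE; ring.
  by rewrite dotBr (Hwc c Cc); ring.
have Hl : lam * dot w w = 2 * dot w (y - c0) by rewrite /lam divfK.
move: (y - c) Hwy => a Hwy.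
rewrite !dotBl !dotBr !dotZl !dotZr (dotC a w) Hwy.
have -> : lam * (lam * dot w w) = lam * (2 * dot w (y - c0)) by rewrite Hl.
ring.
Qed.

Theorem proposition7p3 (R : realType) (n : nat) (M X C : set 'rV[R]_n) :
  metric_coord_system (@euclid_dist R n) M X C ->
  euclid_open X ->
  id_homeomorphism X (@euclid_dist R n) (dC (@euclid_dist R n) C).
Proof.
move=> [XM CM inj] Xo; split.
  move=> x Xx e e0; exists e => // y Xy h; exact: le_lt_trans (dC_le _ _ _) h.
move=> x Xx e e0; have [r r0 ball] := Xo x Xx.
have [[c0 Cc0]|nC] := pselect (exists c, C c).
  have [k [B [HB HS]]] := span_exists [set v | exists2 c, C c & v = c - c0].
  apply: (@dir2 R n X C inj x Xx r r0 ball c0 Cc0 k B) => //.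
  by move=> c Cc; apply: HS; exists c.
exists 1 => // y Xy _.
have [->|yx] := eqVneq y x.
  rewrite dist_nrm subrr /nrm /dot big1 ?sqrtr0 // => i _; by rewrite mxE mul0r.
have xy : x <> y by move=> h; move: yx; rewrite h eqxx.
have [c Cc _] := inj x y Xx Xy xy.
by exfalso; apply: nC; exists c.
Qed.
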